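(* Let $m\geq 13$ and $n\geq 13$ be integers. If $f$ is a signed Roman dominating function of minimum weight on $C_m\vee C_n$ such that $\sum_{y\in N_{C_m}[x]}f(y)<0$ for some $x\in V(C_m)$, then $\gamma_{sR}(C_m\vee C_n)\geq 3$.
   Context: $C_n$ denotes the cycle on $n$ vertices; in $C_m\vee C_n$ the vertex sets $V(C_m)$ and $V(C_n)$ are disjoint. For a graph $G=(V,E)$ and $x\in V$, $N_G[x]=\{x\}\cup\{y: xy\in E\}$ is the closed neighborhood (so $N_{C_m}[x]$ consists of $x$ and its two neighbors on the cycle $C_m$). A signed Roman dominating function (SRDF) on $G$ is a function $f:V\to\{-1,1,2\}$ such that (a) $\sum_{y\in N_G[x]}f(y)\geq 1$ for every $x\in V$, and (b) every vertex $x$ with $f(x)=-1$ is adjacent to at least one vertex $y$ with $f(y)=2$. The weight of $f$ is $\sum_{x\in V}f(x)$, and $\gamma_{sR}(G)$ is the minimum weight of an SRDF on $G$. The join $G_1\vee G_2$ of two graphs has vertex set $V(G_1)\cup V(G_2)$ (disjoint union) and edge set $E(G_1)\cup E(G_2)\cup\{uv: u\in V(G_1), v\in V(G_2)\}$. *)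

(* Defs.v *)
From mathcomp Require Import all_boot all_order all_algebra.
Set Implicit Arguments. Unset Strict Implicit. Unset Printing Implicit Defensive.
Import Order.TTheory GRing.Theory Num.Theory.
Local Open Scope ring_scope.

Definition closed_nbhd (V : finType) (adj : rel V) (x : V) : {set V} :=
  [set y | (y == x) || adj x y].

Definition is_SRDF (V : finType) (adj : rel V) (f : V -> int) : Prop :=
  (forall x, f x \in [:: -1; 1; 2]) /\
  (forall x, 1 <= \sum_(y in closed_nbhd adj x) f y) /\
  (forall x, f x = -1 -> exists y, adj x y /\ f y = 2).

Definition weight (V : finType) (f : V -> int) : int := \sum_(x : V) f x.

Definition is_gamma_sR (V : finType) (adj : rel V) (k : int) : Prop :=
  (exists f, is_SRDF adj f /\ weight f = k) /\
  (forall g, is_SRDF adj g -> k <= weight g).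

Definition min_SRDF (V : finType) (adj : rel V) (f : V -> int) : Prop :=
  is_SRDF adj f /\ forall g, is_SRDF adj g -> weight f <= weight g.

(* the cycle C_m on vertex set 'I_m (meaningful for m >= 3) *)
Definition cycle_adj (m : nat) : rel 'I_m :=
  fun i j => ((j : nat) == (i.+1 %% m)%N) || ((i : nat) == (j.+1 %% m)%N).

Definition join_adj (V1 V2 : finType) (a1 : rel V1) (a2 : rel V2) : rel (V1 + V2)%type :=
  fun u v => match u, v with
             | inl x, inl y => a1 x y
             | inr x, inr y => a2 x y
             | _, _ => true
             end.

Definition CmCn_adj (m n : nat) : rel ('I_m + 'I_n)%type :=
  join_adj (@cycle_adj m) (@cycle_adj n).

(* Main.v *)
Require Import Defs.
From mathcomp Require Import all_boot all_order all_algebra zify.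
Import Order.TTheory GRing.Theory Num.Theory.
Local Open Scope ring_scope.

Lemma nb_eq (n : nat) (y : 'I_n) :
  closed_nbhd (@cycle_adj n) y = y |: (ordS y |: [set ord_pred y]).
Proof.
apply/setP=> z; rewrite !inE /cycle_adj.
have -> : (z == ordS y) = (z == y.+1 %% n :> nat)%N by [].
have -> : (z == ord_pred y) = (y == z.+1 %% n :> nat)%N.
  apply/eqP/eqP=> [->|h]; first by have := ord_predK y; move/(congr1 val).
  by rewrite -[z]ordSK; congr ord_pred; apply: val_inj.
by [].
Qed.

Lemma nb_sum (n : nat) (hn : (3 <= n)%N) (g : 'I_n -> int) (y : 'I_n) :
  \sum_(z in closed_nbhd (@cycle_adj n) y) g z = g y + g (ordS y) + g (ord_pred y).
Proof.
have hy := ltn_ord y.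
have d1 : y != ordS y.
  apply/eqP=> /(congr1 val) /= h.
  have : (y.+1 %% n = y)%N by rewrite -h.
  case: (ltnP y.+1 n) => [lt|ge]; first by rewrite modn_small //; lia.
  have e : y.+1 = n by lia.
  by rewrite e modnn; lia.
have d2 : y != ord_pred y.
  by apply/negP=> /eqP h; move: d1; rewrite {2}h ord_predK eqxx.
have d3 : ordS y != ord_pred y.
  apply/eqP=> h.
  have := congr1 (@ordS n) h; rewrite ord_predK => /(congr1 val) /=.
  case: (ltnP y.+1 n) => [lt|ge].
    rewrite (modn_small lt).
    case: (ltnP y.+2 n) => [lt2|ge2]; first by rewrite modn_small //; lia.
    have e : y.+2 = n by lia.
    by rewrite e modnn; lia.
  have e : y.+1 = n by lia.
  by rewrite e modnn modn_small; lia.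
rewrite nb_eq big_setU1 /=; last by rewrite !inE negb_or d1 d2.
rewrite big_setU1 /=; last by rewrite !inE d3.
by rewrite big_set1 addrA.
Qed.

Lemma cyc_sum (n : nat) (hn : (3 <= n)%N) (g : 'I_n -> int) :
  \sum_y \sum_(z in closed_nbhd (@cycle_adj n) y) g z = 3 * \sum_y g y.
Proof.
rewrite (eq_bigr _ (fun y _ => @nb_sum n hn g y)) !big_split /=.
have e1 : \sum_i g (ordS i) = \sum_i g i by rewrite [RHS](reindex_inj (@ordS_inj n)).
have e2 : \sum_i g (ord_pred i) = \sum_i g i by rewrite [RHS](reindex_inj (@ord_pred_inj n)).
rewrite e1 e2.
have -> : (3 : int) = 1 + 1 + 1 by []. by rewrite !mulrDl mul1r.
Qed.

Lemma nbl (m n : nat) (f : ('I_m + 'I_n)%type -> int) (x : 'I_m) :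
  \sum_(v in closed_nbhd (@CmCn_adj m n) (inl x)) f v =
  \sum_(y in closed_nbhd (@cycle_adj m) x) f (inl y) + \sum_j f (inr j).
Proof.
rewrite big_sumType; congr (_ + _); apply: eq_bigl => y; by rewrite !inE.
Qed.

Lemma nbr (m n : nat) (f : ('I_m + 'I_n)%type -> int) (x : 'I_n) :
  \sum_(v in closed_nbhd (@CmCn_adj m n) (inr x)) f v =
  \sum_i f (inl i) + \sum_(y in closed_nbhd (@cycle_adj n) x) f (inr y).
Proof.
rewrite big_sumType; congr (_ + _); apply: eq_bigl => y; by rewrite !inE.
Qed.

Theorem mainTheorem7 (m n : nat) (hm : (13 <= m)%N) (hn : (13 <= n)%N)
  (f : ('I_m + 'I_n)%type -> int) :
  min_SRDF (@CmCn_adj m n) f ->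
  (exists x : 'I_m, \sum_(y in closed_nbhd (@cycle_adj m) x) f (inl y) < 0) ->
  forall k : int, is_gamma_sR (@CmCn_adj m n) k -> 3 <= k.
Proof.
move=> [hf hmin] [x hx] k [[g [hg wg]] hk]; have [_ [hs _]] := hf.
have wf : weight f = k.
  apply/eqP; rewrite eq_le; apply/andP; split; [rewrite -wg; exact: (hmin g hg) | exact: (hk f hf)].
move: wf; rewrite /weight big_sumType /= => <-.
set A := \sum_i f (inl i); set B := \sum_j f (inr j).
have hB : 2 <= B.
  have := hs (inl x); rewrite nbl -/B. lia.
have hsum : 3 * B >= (n%:Z) * (1 - A).
  rewrite /B -(@cyc_sum n (ltnW (leq_trans _ hn)) (fun j => f (inr j))) //.
  have : \sum_(j : 'I_n) (1 - A) <= \sum_j \sum_(z in closed_nbhd (@cycle_adj n) j) f (inr z).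
    apply: ler_sum => j _; have := hs (inr j); rewrite nbr -/A. lia.
  move=> h; apply: le_trans h; rewrite sumr_const card_ord -mulr_natl. by rewrite natz.
have hn' : (13 <= n%:Z)%R by rewrite lez_nat.
clearbody A B.
case: (lerP 1 A) => hA; first lia.
have h1 : 0 <= n%:Z - 13 by lia.
have h2 : 0 <= - A by lia.
have := mulr_ge0 h1 h2.
nia.
Qed.
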